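(* Let $F$ be a field of characteristic $0$, $h\ge 0$ an integer, and $m=p+q$ with $p,q\ge0$ and $q\ge 1$. Let $z_1,\dots,z_m$ be variables with $\alpha(z_i)=d_i>0$, where $d_1,\dots,d_p$ are odd and $d_{p+1},\dots,d_m$ are even. Suppose $f\in\Gamma_{0,m}\cap T_{\mathbb{Z}}(E^h)$. Then $f\equiv f_1z_m+f_2\pmod I$, where $f_1\in\Gamma_{0,m-1}\cap T_{\mathbb{Z}}(E^h)$ is a multilinear polynomial in $z_1,\dots,z_{m-1}$, and $f_2$ is a linear combination of products of variables and of commutators $[z_i,z_j]$ in which $z_m$ occurs only inside commutators. Moreover $f_2\in\Gamma_{0,m}\cap T_{\mathbb{Z}}(E^h)$.
   Context: $L$ is a vector space over $F$ with basis $e_1,e_2,\dots$, $E$ its unital Grassmann algebra (basis $1$ and $e_{i_1}\cdots e_{i_k}$, $i_1<\cdots<i_k$, with $e_ie_j=-e_je_i$). $E^h$ is $E$ with the $\mathbb{Z}$-grading induced by $\|e_i\|=0$ for $1\le i\le h$ and $\|e_i\|=1$ for $i\ge h+1$ (basis monomials get the sum of degrees of their factors; $1$ has degree $0$). Graded polynomials live in the free unital associative algebra $F\langle X|\mathbb{Z}\rangle$ on countably many variables of each integer degree ($\alpha(x)$ = degree of $x$); $T_{\mathbb{Z}}(A)$ is the set of polynomials vanishing under every substitution of each variable $x$ by an element of $A_{\alpha(x)}$. $I$ is the smallest ideal of $F\langle X|\mathbb{Z}\rangle$ invariant under degree-preserving endomorphisms and containing $[u_1,u_2,u_3]=[[u_1,u_2],u_3]$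 for all choices of degrees of $u_1,u_2,u_3$. For variables $z_1,\dots,z_m$ of fixed positive degrees $d_1,\dots,d_m$, $\Gamma_{0,m}$ denotes the space of multilinear polynomials in $z_1,\dots,z_m$ (with no variables of degree $0$), and $\Gamma_{0,m-1}$ the analogous space for $z_1,\dots,z_{m-1}$. *)

(* Defs.v *)
From HB Require Import structures.
From mathcomp Require Import all_boot all_order all_algebra.
From mathcomp Require Import finmap.
From mathcomp Require Import monalg.

Set Implicit Arguments.
Unset Strict Implicit.
Unset Printing Implicit Defensive.

Import Order.TTheory GRing.Theory Num.Theory.
Local Open Scope ring_scope.


(* Graded variables: a variable is a pair (degree, index); there are   *)
(* countably many variables of each integer degree.  alpha(x) = x.1.   *)
Definition var := (int * nat)%type.
Definition alpha (x : var) : int := x.1.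

Definition word := {fmonom var}.
Definition fpoly (F : fieldType) := {malg F[word]}.

Definition X {F : fieldType} (x : var) : fpoly F := << (FMonom [:: x] : word) >>.

Definition lie {R : nzRingType} (a b : R) : R := a * b - b * a.

Definition wdeg (w : word) : int := \sum_(x <- (w : seq var)) alpha x.
Definition homog {F : fieldType} (d : int) (g : fpoly F) : Prop :=
  forall w, w \in msupp g -> wdeg w = d.

Definition subst {F : fieldType} (sigma : var -> fpoly F) (f : fpoly F) : fpoly F :=
  \sum_(w <- msupp f) f@_w *: \prod_(x <- (w : seq var)) sigma x.

(* The Grassmann algebra E on basis e_0, e_1, ... (0-indexed; e_i here *)
(* is e_{i+1} of the paper).  Elements are finite linear combinations  *)
(* of basis monomials e_S, S a finite set of indices (e_{fset0} = 1).  *)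
Definition grass (F : fieldType) := {malg F[{fset nat}]}.

Definition gsgn {F : fieldType} (S T : {fset nat}) : F :=
  if (S `&` T == fset0)%fset then
    (-1) ^+ (\sum_(s <- S) \sum_(t <- T) (t < s)%N)
  else 0.

Definition gmul {F : fieldType} (a b : grass F) : grass F :=
  \sum_(S <- msupp a) \sum_(T <- msupp b)
     (gsgn S T * a@_S * b@_T) *: << (S `|` T)%fset >>.

Definition gone {F : fieldType} : grass F := << (fset0 : {fset nat}) >>.

Definition gprod {F : fieldType} (s : seq (grass F)) : grass F := foldr gmul gone s.

(* Grading of E^h: ||e_i|| = 0 for the first h generators, 1 otherwise. *)
Definition gdeg (h : nat) (S : {fset nat}) : nat := #|` [fset i in S | (h <= i)%N] |%fset.

Definition inEh {F : fieldType} (h : nat) (d : int) (a : grass F) : Prop :=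
  forall S, S \in msupp a -> (gdeg h S)%:Z = d.

Definition geval {F : fieldType} (phi : var -> grass F) (f : fpoly F) : grass F :=
  \sum_(w <- msupp f) f@_w *: gprod [seq phi x | x <- (w : seq var)].

Definition inTZ {F : fieldType} (h : nat) (f : fpoly F) : Prop :=
  forall phi : var -> grass F, (forall x, inEh h (alpha x) (phi x)) -> geval phi f = 0.

Record graded_T_ideal {F : fieldType} (J : fpoly F -> Prop) : Prop := {
  gti0 : J 0;
  gtiD : forall a b, J a -> J b -> J (a + b);
  gtiZ : forall (c : F) a, J a -> J (c *: a);
  gtiMl : forall a b, J b -> J (a * b);
  gtiMr : forall a b, J a -> J (a * b);
  gtiS : forall sigma : var -> fpoly F, (forall x, homog (alpha x) (sigma x)) ->
           forall a, J a -> J (subst sigma a)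
}.

Definition inI {F : fieldType} (g : fpoly F) : Prop :=
  forall J : fpoly F -> Prop, graded_T_ideal J ->
    (forall x1 x2 x3 : var, J (lie (lie (X x1) (X x2)) (X x3))) -> J g.

Definition zv (d : nat -> nat) (i : nat) : var := ((d i)%:Z, i).

Definition Gamma {F : fieldType} (zs : seq var) (f : fpoly F) : Prop :=
  forall w, w \in msupp f -> perm_eq (w : seq var) zs.

Definition zlist (d : nat -> nat) (n : nat) : seq var := [seq zv d i | i <- iota 1 n].

Definition f2_factor {F : fieldType} (d : nat -> nat) (m : nat) (u : fpoly F) : Prop :=
  (exists i, (1 <= i < m)%N /\ u = X (zv d i)) \/
  (exists i j, (1 <= i <= m)%N /\ (1 <= j <= m)%N /\ u = lie (X (zv d i)) (X (zv d j))).

Definition f2_shape {F : fieldType} (d : nat -> nat) (m : nat) (f : fpoly F) : Prop :=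
  exists terms : seq (F * seq (fpoly F)),
    (forall t, t \in terms -> forall u, u \in t.2 -> f2_factor d m u) /\
    f = \sum_(t <- terms) t.1 *: \prod_(u <- t.2) u.

(* Main.v *)
Require Import Defs.
From HB Require Import structures.
From mathcomp Require Import all_boot all_order all_algebra.
From mathcomp Require Import finmap.
From mathcomp Require Import monalg.
From mathcomp Require Import ring.

Import GRing.Theory.
Local Open Scope ring_scope.



Definition lin {F : fieldType} {K : choiceType} {V : lmodType F}
  (a : {malg F[K]}) (G : K -> V) : V :=
  \sum_(k <- msupp a) a@_k *: G k.

Lemma linEw {F : fieldType} {K : choiceType} {V : lmodType F}
  (a : {malg F[K]}) (G : K -> V) (D : {fset K}) :
  (msupp a `<=` D)%fset -> lin a G = \sum_(k <- D) a@_k *: G k.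
Proof.
move=> sub; rewrite /lin; apply: big_fset_incl => // k _ kn.
by rewrite mcoeff_outdom // scale0r.
Qed.

Lemma lin0 {F : fieldType} {K : choiceType} {V : lmodType F} (G : K -> V) :
  lin (0 : {malg F[K]}) G = 0.
Proof. by rewrite /lin msupp0 big_seq_fset0. Qed.

Lemma linD {F : fieldType} {K : choiceType} {V : lmodType F}
  (a b : {malg F[K]}) (G : K -> V) : lin (a + b) G = lin a G + lin b G.
Proof.
rewrite (@linEw _ _ _ (a + b) G (msupp a `|` msupp b)%fset) ?msuppD_le //.
rewrite (@linEw _ _ _ a G (msupp a `|` msupp b)%fset) ?fsubsetUl //.
rewrite (@linEw _ _ _ b G (msupp a `|` msupp b)%fset) ?fsubsetUr //.
by rewrite -big_split /=; apply: eq_bigr => k _; rewrite mcoeffD scalerDl.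
Qed.

Lemma linZ {F : fieldType} {K : choiceType} {V : lmodType F}
  (c : F) (a : {malg F[K]}) (G : K -> V) : lin (c *: a) G = c *: lin a G.
Proof.
rewrite (@linEw _ _ _ (c *: a) G (msupp a)) ?msuppZ_le //.
rewrite /lin scaler_sumr; apply: eq_bigr => k _; by rewrite mcoeffZ scalerA.
Qed.

Lemma linN {F : fieldType} {K : choiceType} {V : lmodType F}
  (a : {malg F[K]}) (G : K -> V) : lin (- a) G = - lin a G.
Proof. by rewrite -(scaleN1r a) linZ scaleN1r. Qed.

Lemma linB {F : fieldType} {K : choiceType} {V : lmodType F}
  (a b : {malg F[K]}) (G : K -> V) : lin (a - b) G = lin a G - lin b G.
Proof. by rewrite linD linN. Qed.

Lemma linU {F : fieldType} {K : choiceType} {V : lmodType F}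
  (k : K) (G : K -> V) : lin (<< k >> : {malg F[K]}) G = G k.
Proof.
rewrite (@linEw _ _ _ _ G [fset k]%fset) ?msuppU_le // big_seq_fset1.
by rewrite mcoeffUU scale1r.
Qed.

Lemma linUc {F : fieldType} {K : choiceType} {V : lmodType F}
  (c : F) (k : K) (G : K -> V) : lin (<< c *g k >> : {malg F[K]}) G = c *: G k.
Proof.
rewrite (@linEw _ _ _ _ G [fset k]%fset) ?msuppU_le // big_seq_fset1.
by rewrite mcoeffUU.
Qed.

Lemma lin_sum {F : fieldType} {K : choiceType} {V : lmodType F} {I : Type}
  (r : seq I) (P : I -> {malg F[K]}) (G : K -> V) :
  lin (\sum_(i <- r) P i) G = \sum_(i <- r) lin (P i) G.
Proof.
elim: r => [|i r IH]; first by rewrite !big_nil lin0.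
by rewrite !big_cons linD IH.
Qed.

Lemma lin_eq {F : fieldType} {K : choiceType} {V : lmodType F}
  (a : {malg F[K]}) (G1 G2 : K -> V) :
  (forall k, k \in msupp a -> G1 k = G2 k) -> lin a G1 = lin a G2.
Proof. by move=> e; apply: eq_big_seq => k /e ->. Qed.

Lemma linGD {F : fieldType} {K : choiceType} {V : lmodType F}
  (a : {malg F[K]}) (G1 G2 : K -> V) :
  lin a (fun k => G1 k + G2 k) = lin a G1 + lin a G2.
Proof. by rewrite /lin -big_split; apply: eq_bigr => k _; rewrite scalerDr. Qed.

Lemma linGZ {F : fieldType} {K : choiceType} {V : lmodType F}
  (c : F) (a : {malg F[K]}) (G : K -> V) :
  lin a (fun k => c *: G k) = c *: lin a G.
Proof.
rewrite /lin scaler_sumr; apply: eq_bigr => k _; by rewrite !scalerA mulrC.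
Qed.

Lemma linG0 {F : fieldType} {K : choiceType} {V : lmodType F}
  (a : {malg F[K]}) : lin a (fun _ => (0 : V)) = 0.
Proof. by rewrite /lin big1 // => k _; rewrite scaler0. Qed.

Lemma lin_map {F : fieldType} {K : choiceType} {V W : lmodType F}
  (Phi : V -> W) (P0 : Phi 0 = 0) (PD : forall x y, Phi (x + y) = Phi x + Phi y)
  (PZ : forall c x, Phi (c *: x) = c *: Phi x)
  (a : {malg F[K]}) (G : K -> V) : Phi (lin a G) = lin a (fun k => Phi (G k)).
Proof.
rewrite /lin; elim: (enum_fset (msupp a)) => [|k r IH]; first by rewrite !big_nil.
by rewrite !big_cons PD PZ IH.
Qed.

Lemma lin_self {F : fieldType} {K : choiceType} (a : {malg F[K]}) :
  lin a (fun k => << k >>) = a.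
Proof.
rewrite {2}(monalgE a) /lin; apply: eq_bigr => k _.
apply/malgP => k'; rewrite mcoeffZ !mcoeffU.
by case: eqP; rewrite ?mulr1 ?mulr0.
Qed.

Lemma lin_basis {F : fieldType} {K : choiceType} {W : lmodType F}
  (Phi : {malg F[K]} -> W) (P0 : Phi 0 = 0) (PD : forall x y, Phi (x + y) = Phi x + Phi y)
  (PZ : forall c x, Phi (c *: x) = c *: Phi x) (a : {malg F[K]}) :
  Phi a = lin a (fun k => Phi << k >>).
Proof. by rewrite -{1}(lin_self a) lin_map. Qed.


Definition inv (S T : {fset nat}) : nat := (\sum_(s <- S) \sum_(t <- T) (t < s)%N)%N.

Lemma gsgnE {F : fieldType} (S T : {fset nat}) :
  gsgn S T = if [disjoint S & T]%fset then (-1) ^+ inv S T else 0 :> F.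
Proof. by []. Qed.

Lemma big_fsetU_disj (R : Type) (idx : R) (op : Monoid.com_law idx) (A B : {fset nat})
  (G : nat -> R) : [disjoint A & B]%fset ->
  \big[op/idx]_(i <- (A `|` B)%fset) G i = op (\big[op/idx]_(i <- A) G i) (\big[op/idx]_(i <- B) G i).
Proof.
move=> dAB; rewrite -big_cat; apply: perm_big; apply: uniq_perm.
- exact: fset_uniq.
- rewrite cat_uniq !fset_uniq /= andbT; apply/hasPn => x xB.
  by move/fdisjointP_sym: dAB => /(_ x xB).
- by move=> x; rewrite mem_cat in_fsetU.
Qed.

Lemma inv_Ul A B C : [disjoint A & B]%fset -> inv (A `|` B)%fset C = (inv A C + inv B C)%N.
Proof. by move=> dAB; rewrite /inv big_fsetU_disj. Qed.

Lemma inv_Ur A B C : [disjoint B & C]%fset -> inv A (B `|` C)%fset = (inv A B + inv A C)%N.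
Proof.
move=> dBC; rewrite /inv -big_split /=; apply: eq_bigr => s _.
by rewrite big_fsetU_disj.
Qed.

Lemma gsgn_assoc {F : fieldType} (S T U : {fset nat}) :
  gsgn T U * gsgn S (T `|` U)%fset = gsgn S T * gsgn (S `|` T)%fset U :> F.
Proof.
rewrite !gsgnE fdisjointXU fdisjointUX.
case dST: [disjoint S & T]%fset; case dSU: [disjoint S & U]%fset;
  case dTU: [disjoint T & U]%fset; rewrite /= ?mulr0 ?mul0r //.
rewrite inv_Ur // inv_Ul // !exprD; ring.
Qed.

Lemma sum_const_seq (r : seq nat) (c : nat) : (\sum_(i <- r) c)%N = (size r * c)%N.
Proof. by elim: r => [|x r IH]; rewrite ?big_nil // big_cons IH mulSn. Qed.

Lemma inv_sym S T : [disjoint S & T]%fset -> (inv S T + inv T S)%N = (size S * size T)%N.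
Proof.
move=> dST; rewrite /inv [X in (_ + X)%N]exchange_big /= -big_split /=.
rewrite -sum_const_seq; apply: eq_big_seq => s sS.
rewrite -big_split /= card_fset_sum1; apply: eq_big_seq => t tT.
have ne : t != s.
  by apply/eqP => ets; move/fdisjointP: dST => /(_ s sS); rewrite -ets tT.
by case: ltngtP ne.
Qed.

Lemma gsgn_sym {F : fieldType} (S T : {fset nat}) : ~~ odd (size S) ->
  gsgn S T = gsgn T S :> F.
Proof.
move=> eS; rewrite !gsgnE fdisjoint_sym; case dST: [disjoint T & S]%fset => //.
rewrite fdisjoint_sym in dST.
have := @inv_sym S T dST; rewrite -(signr_odd _ (inv S T)) -(signr_odd _ (inv T S)).
move=> /(congr1 odd); rewrite oddD oddM (negbTE eS) /=.
by case: (odd (inv S T)); case: (odd (inv T S)).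
Qed.

Definition gm1 {F : fieldType} (S T : {fset nat}) : grass F :=
  gsgn S T *: << (S `|` T)%fset >>.

Lemma gmulE {F : fieldType} (a b : grass F) :
  gmul a b = lin a (fun S => lin b (fun T => gm1 S T)).
Proof.
rewrite /gmul /lin; apply: eq_bigr => S _; rewrite scaler_sumr; apply: eq_bigr => T _.
by rewrite /gm1 !scalerA; congr (_ *: _); ring.
Qed.

Lemma gmul0l {F : fieldType} (b : grass F) : gmul 0 b = 0.
Proof. by rewrite gmulE lin0. Qed.
Lemma gmulDl {F : fieldType} (a1 a2 b : grass F) : gmul (a1 + a2) b = gmul a1 b + gmul a2 b.
Proof. by rewrite !gmulE linD. Qed.
Lemma gmulZl {F : fieldType} c (a b : grass F) : gmul (c *: a) b = c *: gmul a b.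
Proof. by rewrite !gmulE linZ. Qed.
Lemma gmul0r {F : fieldType} (a : grass F) : gmul a 0 = 0.
Proof. by rewrite gmulE (@lin_eq _ _ _ a _ (fun _ => 0)) ?linG0 // => S _; rewrite lin0. Qed.
Lemma gmulDr {F : fieldType} (a b1 b2 : grass F) : gmul a (b1 + b2) = gmul a b1 + gmul a b2.
Proof. by rewrite !gmulE -linGD; apply: lin_eq => S _; rewrite linD. Qed.
Lemma gmulZr {F : fieldType} c (a b : grass F) : gmul a (c *: b) = c *: gmul a b.
Proof. by rewrite !gmulE -linGZ; apply: lin_eq => S _; rewrite linZ. Qed.

Lemma gmulUl {F : fieldType} S (b : grass F) : gmul << S >> b = lin b (fun T => gm1 S T).
Proof. by rewrite gmulE linU. Qed.
Lemma gmulUU {F : fieldType} S T : gmul << S >> << T >> = gm1 S T :> grass F.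
Proof. by rewrite gmulUl linU. Qed.

Lemma gmulA {F : fieldType} (a b c : grass F) : gmul a (gmul b c) = gmul (gmul a b) c.
Proof.
have step1 S T U : gmul << S >> (gmul << T >> << U >>) = gmul (gmul << S >> << T >>) << U >> :> grass F.
  rewrite !gmulUU /gm1 gmulZr gmulZl !gmulUU /gm1 !scalerA fsetUA.
  by rewrite gsgn_assoc.
have step2 S T (c0 : grass F) : gmul << S >> (gmul << T >> c0) = gmul (gmul << S >> << T >>) c0.
  transitivity (lin c0 (fun U => gmul << S >> (gmul << T >> << U >>))).
    apply: (@lin_basis _ _ _ (fun x => gmul << S >> (gmul << T >> x))).
    - by rewrite !gmul0r.
    - by move=> x y; rewrite !gmulDr.
    - by move=> k x; rewrite !gmulZr.
  symmetry; transitivity (lin c0 (fun U => gmul (gmul << S >> << T >>) << U >>)).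
    apply: (@lin_basis _ _ _ (fun x => gmul (gmul << S >> << T >>) x)).
    - by rewrite !gmul0r.
    - by move=> x y; rewrite !gmulDr.
    - by move=> k x; rewrite !gmulZr.
  by apply: lin_eq => U _; rewrite step1.
have step3 S (b0 c0 : grass F) : gmul << S >> (gmul b0 c0) = gmul (gmul << S >> b0) c0.
  transitivity (lin b0 (fun T => gmul << S >> (gmul << T >> c0))).
    apply: (@lin_basis _ _ _ (fun x => gmul << S >> (gmul x c0))).
    - by rewrite gmul0l gmul0r.
    - by move=> x y; rewrite gmulDl gmulDr.
    - by move=> k x; rewrite gmulZl gmulZr.
  symmetry; transitivity (lin b0 (fun T => gmul (gmul << S >> << T >>) c0)).
    apply: (@lin_basis _ _ _ (fun x => gmul (gmul << S >> x) c0)).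
    - by rewrite gmul0r gmul0l.
    - by move=> x y; rewrite gmulDr gmulDl.
    - by move=> k x; rewrite gmulZr gmulZl.
  by apply: lin_eq => T _; rewrite step2.
transitivity (lin a (fun S => gmul << S >> (gmul b c))).
  apply: (@lin_basis _ _ _ (fun x => gmul x (gmul b c))).
  - by rewrite gmul0l.
  - by move=> x y; rewrite gmulDl.
  - by move=> k x; rewrite gmulZl.
symmetry; transitivity (lin a (fun S => gmul (gmul << S >> b) c)).
  apply: (@lin_basis _ _ _ (fun x => gmul (gmul x b) c)).
  - by rewrite !gmul0l.
  - by move=> x y; rewrite !gmulDl.
  - by move=> k x; rewrite !gmulZl.
by apply: lin_eq => S _; rewrite step3.
Qed.

Lemma gmul1l {F : fieldType} (x : grass F) : gmul gone x = x.
Proof.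
rewrite /gone gmulUl -{2}(lin_self x); apply: lin_eq => T _.
by rewrite /gm1 gsgnE fdisjoint0X /inv big_seq_fset0 expr0 scale1r fset0U.
Qed.

Lemma gprod_cat {F : fieldType} (s1 s2 : seq (grass F)) :
  gprod (s1 ++ s2) = gmul (gprod s1) (gprod s2).
Proof.
elim: s1 => [|a s1 IH] /=; first by rewrite gmul1l.
by rewrite /gprod /= -/(gprod _) IH gmulA.
Qed.

Lemma gmul_central {F : fieldType} (S : {fset nat}) (x : grass F) : ~~ odd (size S) ->
  gmul << S >> x = gmul x << S >>.
Proof.
move=> eS.
transitivity (lin x (fun T => gmul << S >> << T >>)).
  apply: (@lin_basis _ _ _ (fun y => gmul << S >> y)).
  - by rewrite gmul0r.
  - by move=> y z; rewrite gmulDr.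
  - by move=> k y; rewrite gmulZr.
symmetry; transitivity (lin x (fun T => gmul << T >> << S >>)).
  apply: (@lin_basis _ _ _ (fun y => gmul y << S >>)).
  - by rewrite gmul0l.
  - by move=> y z; rewrite gmulDl.
  - by move=> k y; rewrite gmulZl.
apply: lin_eq => T _; rewrite !gmulUU /gm1 fsetUC.
by rewrite (@gsgn_sym F S T eS).
Qed.


Lemma fsetU_disj_inj (T T0 S : {fset nat}) : [disjoint T & S]%fset -> [disjoint T0 & S]%fset ->
  (T `|` S)%fset = (T0 `|` S)%fset -> T = T0.
Proof.
move=> dT dT0 /fsetP e; apply/fsetP => i.
have := e i; rewrite !in_fsetU.
case iS: (i \in S).
  move/fdisjointP_sym: dT => /(_ i iS) /negbTE ->.
  by move/fdisjointP_sym: dT0 => /(_ i iS) /negbTE ->.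
by rewrite !orbF.
Qed.

Lemma gmul_U_inj {F : fieldType} (x : grass F) (S : {fset nat}) :
  (forall T, T \in msupp x -> [disjoint T & S]%fset) -> gmul x << S >> = 0 -> x = 0.
Proof.
move=> disj.
have -> : gmul x << S >> = lin x (fun T => gm1 T S).
  by rewrite gmulE; apply: lin_eq => T _; rewrite linU.
move=> H; apply/malgP => T0; rewrite mcoeff0.
case: (msuppP x T0) => // T0x; exfalso.
have := congr1 (mcoeff (T0 `|` S)%fset) H.
rewrite mcoeff0 /lin raddf_sum /= (bigD1_seq T0) ?fset_uniq //=.
rewrite big1_seq ?addr0; last first.
  move=> T /andP [TT0 Tx].
  rewrite mcoeffZ /gm1 mcoeffZ mcoeffU.
  case: eqP; last by rewrite mulr0n !mulr0.
  by move=> /(@fsetU_disj_inj T T0 S (disj _ Tx) (disj _ T0x)) /eqP; rewrite (negbTE TT0).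
rewrite mcoeffZ /gm1 mcoeffZ mcoeffU eqxx mulr1n gsgnE (disj _ T0x).
move/eqP; rewrite mulf_eq0 => /orP [/eqP xT0|]; last by rewrite mulr1 signr_eq0.
by move: T0x; rewrite -mcoeff_neq0 => /eqP.
Qed.

Definition Wm {F : fieldType} (s : seq var) : fpoly F := << (FMonom s : word) >>.

Lemma Wm_cat {F : fieldType} (s1 s2 : seq var) : Wm (s1 ++ s2) = Wm s1 * Wm s2 :> fpoly F.
Proof. by rewrite /Wm malgM_def fgmulUU mulr1 -[mmul _ _]/(fmmul _ _) fmmulE. Qed.

Lemma Wm_nil {F : fieldType} : Wm [::] = 1 :> fpoly F.
Proof. rewrite /Wm /= /GRing.one /= /fgone -[mone]/(fmone _) fmoneE. by []. Qed.

Lemma Wm_cons {F : fieldType} x (s : seq var) : Wm (x :: s) = X x * Wm s :> fpoly F.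
Proof. by rewrite -cat1s Wm_cat. Qed.

Lemma X_prod {F : fieldType} (s : seq var) : \prod_(y <- map X s) y = Wm s :> fpoly F.
Proof.
elim: s => [|x s IH]; first by rewrite big_nil Wm_nil.
by rewrite /= big_cons IH Wm_cons.
Qed.

Lemma gevalE {F : fieldType} (phi : var -> grass F) (y : fpoly F) :
  geval phi y = lin y (fun w : word => gprod (map phi w)).
Proof. by []. Qed.

Lemma geval_Wm {F : fieldType} (phi : var -> grass F) s : geval phi (Wm s) = gprod (map phi s).
Proof. by rewrite gevalE linU. Qed.

Lemma msupp_sum {F : fieldType} {K : choiceType} {I : eqType} (r : seq I) (P : I -> {malg F[K]}) k :
  k \in msupp (\sum_(i <- r) P i) -> exists2 i, i \in r & k \in msupp (P i).
Proof.
elim: r => [|i r IH]; first by rewrite big_nil msupp0.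
rewrite big_cons => /(fsubsetP (msuppD_le _ _)); rewrite in_fsetU => /orP [kP|kr].
  by exists i; rewrite ?mem_head.
by have [j jr kj] := IH kr; exists j; rewrite // in_cons jr orbT.
Qed.

Lemma msupp_ZW {F : fieldType} (c : F) s k : k \in msupp (c *: Wm s) -> (k : seq var) = s.
Proof.
move/(fsubsetP (msuppZ_le _ _))/(fsubsetP msuppU_le); rewrite in_fset1 => /eqP -> //.
Qed.

Lemma prodP_cat {F : fieldType} (s1 s2 : seq (fpoly F)) :
  \prod_(z <- s1 ++ s2) z = (\prod_(z <- s1) z) * (\prod_(z <- s2) z).
Proof. exact: big_cat. Qed.

Lemma prodP_cons {F : fieldType} (x : fpoly F) s :
  \prod_(z <- x :: s) z = x * (\prod_(z <- s) z).
Proof. exact: big_cons. Qed.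

Lemma ring_id4 (R : pzRingType) (A B C D : R) :
  A * ((C * D - D * C) * B) = A * (C * (D * B)) - A * (D * (C * B)).
Proof. by rewrite mulrBl mulrBr !mulrA. Qed.

Lemma prod_factors {F : fieldType} (s1 s2 : seq var) (x y : var) :
  \prod_(z <- map X s1 ++ lie (X x) (X y) :: map X s2) z
  = Wm (s1 ++ x :: y :: s2) - Wm (s1 ++ y :: x :: s2) :> fpoly F.
Proof.
rewrite prodP_cat prodP_cons !X_prod /lie !(Wm_cat s1).
rewrite (Wm_cons x (y :: s2)) (Wm_cons y s2) (Wm_cons y (x :: s2)) (Wm_cons x s2).
exact: ring_id4.
Qed.

Lemma telescope {F : fieldType} (a : var) (v u : seq var) :
  Wm (u ++ a :: v) - Wm (u ++ v ++ [:: a]) =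
  \sum_(j <- iota 0 (size v))
     \prod_(y <- map X (u ++ take j v) ++ lie (X a) (X (nth a v j)) :: map X (drop j.+1 v)) y
  :> fpoly F.
Proof.
rewrite (eq_bigr (fun j => Wm ((u ++ take j v) ++ a :: nth a v j :: drop j.+1 v)
    - Wm ((u ++ take j v) ++ nth a v j :: a :: drop j.+1 v))); last by move=> j _; rewrite prod_factors.
elim: v u => [|b v IH] u; first by rewrite /= big_nil subrr.
rewrite /= big_cons /= drop0 cats0.
rewrite -(addn0 1%N) iotaDl big_map.
rewrite (eq_bigr (fun i => Wm (((u ++ [:: b]) ++ take i v) ++ a :: nth a v i :: drop i.+1 v)
    - Wm (((u ++ [:: b]) ++ take i v) ++ nth a v i :: a :: drop i.+1 v))); last first.
  by move=> j _; rewrite add1n /= -!catA.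
rewrite -IH -!catA /=.
by rewrite addrA subrK.
Qed.


Definition uu (a : var) (w : seq var) := take (index a w) w.
Definition vv (a : var) (w : seq var) := drop (index a w).+1 w.

Lemma decomp (a : var) (w : seq var) : a \in w -> w = uu a w ++ a :: vv a w.
Proof.
move=> aw; rewrite /uu /vv -{1}(cat_take_drop (index a w) w).
by rewrite (drop_nth a) ?index_mem // nth_index.
Qed.

Lemma zlistS d n : zlist d n.+1 = zlist d n ++ [:: zv d n.+1].
Proof. by rewrite /zlist (_ : iota 1 n.+1 = iota 1 n ++ [:: 1 + n]) ?map_cat ?add1n // -[n.+1]addn1 iotaD. Qed.

Lemma zlist_uniq d n : uniq (zlist d n).
Proof.
rewrite /zlist map_inj_uniq ?iota_uniq // => i j /(congr1 snd) //.
Qed.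

Lemma mem_zlist d n x : x \in zlist d n -> exists i, (1 <= i <= n)%N /\ x = zv d i.
Proof.
case/mapP => i; rewrite mem_iota => /andP [i1 i2] ->; exists i; split => //.
by rewrite i1 /=; rewrite add1n ltnS in i2.
Qed.

Lemma word_facts d n (w : seq var) : perm_eq w (zlist d n.+1) ->
  [/\ zv d n.+1 \in w, w = uu (zv d n.+1) w ++ zv d n.+1 :: vv (zv d n.+1) w,
      perm_eq (uu (zv d n.+1) w ++ vv (zv d n.+1) w) (zlist d n)
    & zv d n.+1 \notin uu (zv d n.+1) w ++ vv (zv d n.+1) w].
Proof.
set a := zv d n.+1 => Hw.
have P1 : perm_eq w (a :: zlist d n) by rewrite (permPl Hw) zlistS cats1 perm_rcons.
have aw : a \in w by rewrite (perm_mem P1) mem_head.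
have ew := @decomp a w aw.
have P2 : perm_eq (a :: (uu a w ++ vv a w)) (a :: zlist d n).
  apply: (perm_trans _ P1); set u := uu a w; set v := vv a w.
  by rewrite perm_sym [X in perm_eq X _]ew -cat1s perm_catCA.
split => //; first by rewrite -(perm_cons a).
have := zlist_uniq d n.+1; rewrite -(perm_uniq Hw) (perm_uniq P1) -(perm_uniq P2) /=.
by case/andP.
Qed.


Lemma gmul_suml {F : fieldType} {I : Type} (r : seq I) (x : I -> grass F) c :
  gmul (\sum_(i <- r) x i) c = \sum_(i <- r) gmul (x i) c.
Proof.
elim: r => [|i r IH]; first by rewrite !big_nil gmul0l.
by rewrite !big_cons gmulDl IH.
Qed.

Lemma geval_sumZW {F : fieldType} (phi : var -> grass F) {I : Type} (r : seq I)
  (c : I -> F) (s : I -> seq var) :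
  geval phi (\sum_(i <- r) c i *: Wm (s i)) = \sum_(i <- r) c i *: gprod (map phi (s i)).
Proof. rewrite gevalE lin_sum; apply: eq_bigr => i _; by rewrite linZ linU. Qed.

Lemma gprod_cons {F : fieldType} (x : grass F) s : gprod (x :: s) = gmul x (gprod s).
Proof. by []. Qed.

Lemma main_gen (F : fieldType) h d n (f : fpoly F) (dme : ~~ odd (d n.+1))
  (hfG : Gamma (zlist d n.+1) f) (hfT : inTZ h f) :
  exists f1 f2 : fpoly F,
    inI (f - (f1 * X (zv d n.+1) + f2)) /\
    Gamma (zlist d n) f1 /\ inTZ h f1 /\
    f2_shape d n.+1 f2 /\
    Gamma (zlist d n.+1) f2 /\ inTZ h f2.
Proof.
set a := zv d n.+1.
pose g : fpoly F := \sum_(w <- msupp f) f@_w *: Wm (uu a w ++ vv a w).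
have gdef : g = \sum_(w <- msupp f) f@_w *: Wm (uu a w ++ vv a w) by [].
clearbody g.
have fE : f = \sum_(w <- msupp f) f@_w *: Wm w.
  rewrite {1}(monalgE f); apply: eq_bigr => w _.
  rewrite /Wm fmK; apply/malgP => k; rewrite mcoeffZ !mcoeffU.
  by case: eqP; rewrite ?mulr1n ?mulr0n ?mulr1 ?mulr0.
have gXa : g * X a = \sum_(w <- msupp f) f@_w *: Wm ((uu a w ++ vv a w) ++ [:: a]).
  rewrite gdef mulr_suml; apply: eq_bigr => w _.
  by rewrite -scalerAl (Wm_cat (uu a w ++ vv a w) [:: a]).
have gZ : inTZ h g.
  move=> phi Hphi.
  have gev : geval phi g = \sum_(w <- msupp f) f@_w *: gprod (map phi (uu a w ++ vv a w)).
    by rewrite gdef geval_sumZW.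
  move: (geval phi g) gev => x gev.
  pose N := ((\max_(T <- msupp x) \max_(i <- T) i).+1 + h)%N.
  pose S : {fset nat} := [fset i | i in iota N (d n.+1)]%fset.
  have memS i : (i \in S) = (i \in iota N (d n.+1)) by rewrite /S inE.
  have cardS : #|` S| = d n.+1.
    by rewrite /S card_fseq undup_id; [exact: size_iota | exact: iota_uniq].
  clearbody S.
  have hN : (h <= N)%N by rewrite /N leq_addl.
  have bnd T i : T \in msupp x -> i \in T -> (i < N)%N.
    move=> Tx iT; rewrite /N; apply: (leq_trans _ (leq_addr h _)); rewrite ltnS.
    apply: (leq_trans _ (@leq_bigmax_seq _ _ xpredT (fun T' : {fset nat} => \max_(j <- T') j) T Tx isT)).
    exact: (@leq_bigmax_seq _ _ xpredT id i iT isT).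
  clearbody N.
  have disj : forall T, T \in msupp x -> [disjoint T & S]%fset.
    move=> T Tx; apply/fdisjointP => i iT.
    by rewrite memS mem_iota (leqNgt N i) (bnd T i Tx iT).
  pose psi := fun y => if y == a then << S >> else phi y.
  have Hpsi : forall y, inEh h (alpha y) (psi y).
    move=> y; rewrite /psi; case: eqP => [->|_]; last exact: Hphi.
    move=> T; rewrite msuppU oner_eq0 in_fset1 => /eqP ->.
    rewrite /gdeg (_ : [fset i in S | (h <= i)%N]%fset = S); first by rewrite cardS.
    apply/fsetP => i; rewrite !inE /= memS mem_iota.
    case/boolP: (N <= i < N + d n.+1)%N => [/andP [Ni _]|_]; [rewrite andTb; exact: leq_trans hN Ni | exact: andFb].
  have H0 := hfT psi Hpsi.
  have : gmul x << S >> = 0.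
    rewrite -H0 gev gmul_suml [in RHS]fE geval_sumZW; apply: eq_big_seq => w wf.
    clear gev H0 fE gXa gdef hfT Hphi Hpsi disj bnd.
    rewrite gmulZl; congr (_ *: _).
    have [aw ew Pw anot] := @word_facts d n w (hfG w wf).
    move: anot ew; rewrite -/a; set u := uu a w; set v := vv a w => anot ew.
    have -> : map psi w = map phi u ++ << S >> :: map phi v.
      rewrite {1}ew map_cat /= /psi eqxx; congr (_ ++ _ :: _); apply/eq_in_map => y yu;
        case: eqP => // eya; rewrite eya in yu; by rewrite mem_cat yu ?orbT in anot.
    have eS : ~~ odd #|` S| by rewrite cardS.
    rewrite gprod_cat gprod_cons (@gmul_central F S _ eS) gmulA -gprod_cat -map_cat.
    reflexivity.
  by move/gmul_U_inj => /(_ disj).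
exists g, (f - g * X a).
split.
  rewrite (_ : f - (g * X a + (f - g * X a)) = 0); last by rewrite [g * X a + _]addrC subrK subrr.
  by move=> J HJ _; exact: (gti0 HJ).
split.
  move=> k; rewrite gdef => /msupp_sum [w wf kw]; rewrite (msupp_ZW _ _ _ kw).
  by have [_ _ Pw _] := @word_facts d n w (hfG w wf).
split; first exact: gZ.
split.
  exists (flatten [seq [seq (f@_w, map X (uu a w ++ take j (vv a w)) ++
      lie (X a) (X (nth a (vv a w) j)) :: map X (drop j.+1 (vv a w))) | j <- iota 0 (size (vv a w))]
      | w <- msupp f]).
  split.
    clear fE gXa gdef gZ hfT.
    move=> t /flattenP [ts /mapP [w wf ->] /mapP [j jv ->]] u /=.
    have [aw ew Pw anot] := @word_facts d n w (hfG w wf).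
    have vw : forall y, y \in vv a w -> y \in zlist d n.+1.
      by move=> y yv; rewrite -(perm_mem (hfG w wf)) ew mem_cat in_cons yv !orbT.
    have uvn : forall y, y \in uu a w ++ vv a w -> exists i, (1 <= i < n.+1)%N /\ y = zv d i.
      move=> y; rewrite (perm_mem Pw) => /mem_zlist [i [/andP [i1 i2] ->]].
      by exists i; rewrite i1 ltnS i2.
    rewrite mem_cat in_cons => /orP [/mapP [y yin ->] | /orP [/eqP -> | /mapP [y yin ->]]].
    - left; have [|i [Hi ->]] := uvn y; last by exists i.
      by move: yin; rewrite !mem_cat => /orP [-> //|/mem_take ->]; rewrite orbT.
    - have jlt : (j < size (vv a w))%N by move: jv; rewrite mem_iota.
      right; have [j' [j1 ->]] := @mem_zlist d n.+1 _ (vw _ (mem_nth a jlt)).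
      by exists n.+1, j'; rewrite leqnn.
    - left; have [|i [Hi ->]] := uvn y; last by exists i.
      by rewrite mem_cat (mem_drop yin) orbT.
  rewrite big_flatten big_map /= gXa {1}fE -sumrB; apply: eq_big_seq => w wf.
  rewrite big_map -scaler_sumr -scalerBr; congr (_ *: _).
  have [aw ew Pw anot] := @word_facts d n w (hfG w wf).
  by rewrite -telescope -catA -ew.
split.
  move=> k /(fsubsetP (msuppB_le _ _)); rewrite in_fsetU => /orP [/hfG //|].
  rewrite gXa => /msupp_sum [w wf kw]; rewrite (msupp_ZW _ _ _ kw).
  have [_ _ Pw _] := @word_facts d n w (hfG w wf).
  by rewrite zlistS perm_cat2r.
move=> phi Hphi.
rewrite gevalE linB -!gevalE (hfT phi Hphi) gXa geval_sumZW.
have := gZ phi Hphi; rewrite gdef geval_sumZW => H.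
rewrite (eq_bigr (fun w => f@_w *: gmul (gprod (map phi (uu a w ++ vv a w))) (gprod [:: phi a]))); last first.
  by move=> w _; rewrite map_cat gprod_cat.
have -> : \sum_(w <- msupp f) f@_w *: gmul (gprod (map phi (uu a w ++ vv a w))) (gprod [:: phi a])
  = gmul (\sum_(w <- msupp f) f@_w *: gprod (map phi (uu a w ++ vv a w))) (gprod [:: phi a]).
  by rewrite gmul_suml; apply: eq_bigr => w _; rewrite gmulZl.
by rewrite H gmul0l subr0.
Qed.

Theorem mainTheorem11 (F : fieldType) (charF0 : [pchar F] =i pred0)
  (h p q : nat) (hq : (1 <= q)%N) (d : nat -> nat)
  (dpos : forall i, (1 <= i <= p + q)%N -> (0 < d i)%N)
  (dodd : forall i, (1 <= i <= p)%N -> odd (d i))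
  (deven : forall i, (p < i <= p + q)%N -> ~~ odd (d i))
  (f : fpoly F)
  (hfG : Gamma (zlist d (p + q)) f) (hfT : inTZ h f) :
  exists f1 f2 : fpoly F,
    inI (f - (f1 * X (zv d (p + q)) + f2)) /\
    Gamma (zlist d (p + q).-1) f1 /\ inTZ h f1 /\
    f2_shape d (p + q) f2 /\
    Gamma (zlist d (p + q)) f2 /\ inTZ h f2.
Proof.
have Hm : (0 < p + q)%N by rewrite addn_gt0 hq orbT.
have dme : ~~ odd (d (p + q)).
  by apply: deven; rewrite leqnn andbT -{1}(addn0 p) ltn_add2l.
have H := @main_gen F h d (p + q).-1 f.
rewrite (prednK Hm) in H.
exact: H dme hfG hfT.
Qed.
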